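(* Let $H$ be a connected pointed block graph, let $Q$ be a near-leaf block of $H$, and let $v$ be the anchor of $Q$ if it exists and otherwise any cut-vertex of $Q$. Let $x\neq v$ be a cut-vertex of $Q$ and let $L$ be a leaf block of $H$ that is a neighbour of $Q$ and contains $x$. Then every maximal co-interval subgraph $K$ of $H$ with $E(L)\subseteq E(K)$ satisfies $E(K)=E(Q_{x,y})$ for some $y\in V(Q)$.
   Context: All graphs are finite and simple. A block is a maximal connected subgraph with no cut-vertex of its own; a block graph is one whose blocks are all complete. A cut-vertex is a vertex whose removal increases the number of connected components. A block is a leaf block if it contains exactly one cut-vertex, an internal block if it contains at least two, and an edge block if it has exactly two vertices; two distinct blocks are neighbours if they share a vertex. A graph is pointed if all its leaf blocks are edge blocks. An internal block $Q$ is a near-leaf block if either all neighbours of $Q$ are leaf blocks, or all internal block neighbours of $Q$ share with $Q$ one and the same cut-vertex, called the anchor of $Q$. For a clique $Q$ and $x,y\in V(Q)$, the big ant is $Q_{x,y}=\big(V(Q)\cup N_H(x)\cup N_H(y),\ E(Q)\cup\delta_H(x)\cup\delta_H(y)\big)$. A graph is co-interval if its vertices can be assigned closed real intervals such that two vertices are adjacent iff their intervals are disjoint. A co-interval subgraph $K$ of $H$ is maximal if no co-interval subgraph $K'$ of $H$ has $E(K)\subsetneq E(K')$. *)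

(* Defs.v *)
From Stdlib Require Import Reals.
From mathcomp Require Import all_boot.
Set Implicit Arguments. Unset Strict Implicit. Unset Printing Implicit Defensive.

Section Graphs.
Variable T : finType.

(* A graph/subgraph is a pair (vertex set, edge set); edges are 2-element sets. *)
Definition sgraph := ({set T} * {set {set T}})%type.

Definition EH (e : rel T) : {set {set T}} :=
  [set f : {set T} | [exists x, exists y, e x y && (f == [set x; y])]].

Definition is_subgraph (e : rel T) (G : sgraph) : bool :=
  (G.2 \subset EH e) && [forall f in G.2, f \subset G.1].

Definition adjF (F : {set {set T}}) : rel T :=
  [rel x y | (x != y) && ([set x; y] \in F)].

Definition conn (S : {set T}) (F : {set {set T}}) : rel T :=
  connect [rel x y | [&& x \in S, y \in S & adjF F x y]].

Definition ncomp (S : {set T}) (F : {set {set T}}) : nat :=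
  #|[set [set y in S | conn S F x y] | x in S]|.

Definition gconnected (G : sgraph) : bool := ncomp G.1 G.2 == 1.

Definition is_cut (G : sgraph) (v : T) : bool :=
  (v \in G.1) && (ncomp G.1 G.2 < ncomp (G.1 :\ v) G.2).

Definition no_cut (G : sgraph) : bool := [forall v, ~~ is_cut G v].

Definition sub_le (G G' : sgraph) : bool := (G.1 \subset G'.1) && (G.2 \subset G'.2).

Definition Hgraph (e : rel T) : sgraph := ([set: T], EH e).

Definition cutH (e : rel T) (v : T) : bool := is_cut (Hgraph e) v.

Definition is_block (e : rel T) (B : sgraph) : Prop :=
  [&& is_subgraph e B, gconnected B & no_cut B] /\
  forall B' : sgraph, [&& is_subgraph e B', gconnected B' & no_cut B'] ->
    sub_le B B' -> B' = B.

Definition complete (B : sgraph) : bool :=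
  [forall x in B.1, forall y in B.1, (x != y) ==> ([set x; y] \in B.2)].

Definition block_graph (e : rel T) : Prop :=
  forall B, is_block e B -> complete B.

Definition ncutin (e : rel T) (B : sgraph) : nat := #|[set v in B.1 | cutH e v]|.

Definition leaf_block (e : rel T) (B : sgraph) : Prop := is_block e B /\ ncutin e B = 1.
Definition internal_block (e : rel T) (B : sgraph) : Prop := is_block e B /\ 2 <= ncutin e B.
Definition edge_block (e : rel T) (B : sgraph) : Prop := is_block e B /\ #|B.1| = 2.

Definition neighbours (e : rel T) (B B' : sgraph) : Prop :=
  [/\ is_block e B, is_block e B', B <> B' & ~~ [disjoint B.1 & B'.1]].

Definition pointed (e : rel T) : Prop :=
  forall B, leaf_block e B -> edge_block e B.

Definition shares_common_cut (e : rel T) (Q : sgraph) (a : T) : Prop :=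
  [/\ a \in Q.1, cutH e a &
     forall B, internal_block e B -> neighbours e Q B -> B.1 :&: Q.1 = [set a]].

Definition near_leaf (e : rel T) (Q : sgraph) : Prop :=
  internal_block e Q /\
  ((forall B, neighbours e Q B -> leaf_block e B) \/
   exists a, shares_common_cut e Q a).

(* the anchor exists only when Q has an internal neighbour *)
Definition is_anchor (e : rel T) (Q : sgraph) (a : T) : Prop :=
  (exists B, internal_block e B /\ neighbours e Q B) /\ shares_common_cut e Q a.

Definition delta (e : rel T) (x : T) : {set {set T}} := [set f in EH e | x \in f].

Definition big_ant_edges (e : rel T) (Q : sgraph) (x y : T) : {set {set T}} :=
  Q.2 :|: delta e x :|: delta e y.

Definition co_interval (G : sgraph) : Prop :=
  exists l r : T -> R,
    (forall v, v \in G.1 -> Rle (l v) (r v)) /\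
    (forall u v, u \in G.1 -> v \in G.1 -> u != v ->
       ([set u; v] \in G.2 <-> (Rlt (r u) (l v) \/ Rlt (r v) (l u)))).

Definition co_interval_subgraph (e : rel T) (K : sgraph) : Prop :=
  is_subgraph e K /\ co_interval K.

Definition maximal_co_interval (e : rel T) (K : sgraph) : Prop :=
  co_interval_subgraph e K /\
  ~ (exists K', co_interval_subgraph e K' /\ K.2 \proper K'.2).

End Graphs.

(* Main.v *)
Require Import Defs.
From Stdlib Require Import Reals Lra Classical.
From mathcomp Require Import all_boot zify.
Open Scope R_scope.

Definition Dj (l r : R * R) := (snd l < fst r \/ snd r < fst l).

Ltac kill := repeat match goal with H : ~ (_ \/ _) |- _ => apply Classical_Prop.not_or_and in H; destruct H end;
  unfold Dj in *; simpl in *;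
  repeat match goal with H : _ \/ _ |- _ => destruct H end; lra.

Lemma iv_2K2 x z a b : Dj x z -> Dj a b -> ~Dj x a -> ~Dj x b -> ~Dj z a -> ~Dj z b -> False.
Proof. unfold Dj; intros; kill. Qed.

Lemma iv_6 x z q1 c1 q2 c2 : Dj x z -> Dj q1 c1 -> Dj q2 c2 -> ~Dj x c1 -> ~Dj z c1 ->
  ~Dj x c2 -> ~Dj z c2 -> ~Dj z q1 -> ~Dj z q2 -> ~Dj q1 c2 -> ~Dj q2 c1 -> False.
Proof. unfold Dj; intros; kill. Qed.

Close Scope R_scope.

Set Implicit Arguments. Unset Strict Implicit. Unset Printing Implicit Defensive.

Section Aux.
Variable T : finType.
Implicit Types (S : {set T}) (F : {set {set T}}).

Definition crel S F := [rel x y | [&& x \in S, y \in S & adjF F x y]].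

Lemma adjF_sym F : symmetric (adjF F).
Proof. by move=> a b; rewrite /adjF /= eq_sym setUC. Qed.

Lemma crel_sym S F : symmetric (crel S F).
Proof. by move=> a b; rewrite /= adjF_sym andbCA andbA. Qed.

Lemma conn_sym S F a b : conn S F a b = conn S F b a.
Proof. exact: (sym_connect_sym (crel_sym S F)). Qed.

Lemma conn_trans S F a b c : conn S F a b -> conn S F b c -> conn S F a c.
Proof. exact: connect_trans. Qed.

Lemma ncomp_le1 S F : {in S &, forall a b, conn S F a b} -> ncomp S F <= 1.
Proof.
move=> H; apply/card_le1_eqP => A B /imsetP[a Ha ->] /imsetP[b Hb ->].
apply/setP => y; rewrite !inE; case yS: (y \in S) => //=.
apply/idP/idP => Hy.
- exact: conn_trans (H _ _ Ha Hb) Hy.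
- exact: conn_trans (H _ _ Hb Ha) Hy.
Qed.

Lemma ncomp_eq1 S F a : a \in S -> {in S &, forall a b, conn S F a b} -> ncomp S F = 1.
Proof.
move=> Ha H; apply/eqP; rewrite eqn_leq ncomp_le1 //= card_gt0.
by apply/set0Pn; exists [set y in S | conn S F a y]; apply: imset_f.
Qed.

Lemma ncomp_conn S F : ncomp S F <= 1 -> {in S &, forall a b, conn S F a b}.
Proof.
move/card_le1_eqP => H a b Ha Hb.
have E := H _ _ (imset_f (fun x => [set y in S | conn S F x y]) Ha)
                (imset_f (fun x => [set y in S | conn S F x y]) Hb).
have : b \in [set y in S | conn S F b y] by rewrite inE Hb; apply: connect0.
by rewrite E inE => /andP[].
Qed.

Lemma hub_conn S F h : h \in S -> (forall a, a \in S -> conn S F h a) ->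
  {in S &, forall a b, conn S F a b}.
Proof. move=> Hh H a b Ha Hb; apply: (conn_trans (b:=h)); [rewrite conn_sym|]; exact: H. Qed.

Lemma conn_edge S F a b : a \in S -> b \in S -> a != b -> [set a; b] \in F ->
  conn S F a b.
Proof. by move=> Ha Hb ab H; apply: connect1; rewrite /= Ha Hb /adjF /= ab. Qed.

Lemma conn_mono S S' F F' a b : S \subset S' -> F \subset F' ->
  conn S F a b -> conn S' F' a b.
Proof.
move=> sS sF; apply: connect_sub => c d /and3P[Hc Hd /andP[cd H]].
by apply: connect1; rewrite /= (subsetP sS _ Hc) (subsetP sS _ Hd) /adjF /= cd (subsetP sF _ H).
Qed.

Lemma nocut_of (G : sgraph T) : gconnected G ->
  (forall w, w \in G.1 -> {in G.1 :\ w &, forall a b, conn (G.1 :\ w) G.2 a b}) ->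
  no_cut G.
Proof.
move=> Hc H; apply/forallP => w; rewrite /is_cut negb_and.
case wG: (w \in G.1) => //=; rewrite -leqNgt (eqP Hc); exact: ncomp_le1 (H _ wG).
Qed.

Variable e : rel T.
Hypothesis e_sym : symmetric e.
Hypothesis e_irr : irreflexive e.

Lemma EHP f : reflect (exists a b, e a b /\ f = [set a; b]) (f \in EH e).
Proof.
rewrite inE; apply: (iffP existsP) => [[a /existsP[b /andP[H /eqP->]]]|[a [b [H ->]]]].
  by exists a, b.
by exists a; apply/existsP; exists b; rewrite H eqxx.
Qed.

Lemma EH_edge a b : ([set a; b] \in EH e) = e a b.
Proof.
apply/idP/idP; last by move=> H; apply/EHP; exists a, b.
case/EHP => [c [d [H E]]].
have cd : c != d by apply: contraTneq H => ->; rewrite e_irr.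
have ha : a \in [set c; d] by rewrite -E !inE eqxx.
have hb : b \in [set c; d] by rewrite -E !inE eqxx orbT.
have hc : c \in [set a; b] by rewrite E !inE eqxx.
have hd : d \in [set a; b] by rewrite E !inE eqxx orbT.
case/set2P: ha => ?; case/set2P: hb => ?; subst => //. all: try (by rewrite e_sym).
- by move: hd cd; rewrite !inE orbb => /eqP->; rewrite eqxx.
- by move: hc cd; rewrite !inE orbb => /eqP->; rewrite eqxx.
Qed.

Lemma EH_neq a b : [set a; b] \in EH e -> a != b.
Proof. by rewrite EH_edge; apply: contraTneq => ->; rewrite e_irr. Qed.


Definition cng (G : sgraph T) := [&& is_subgraph e G, gconnected G & no_cut G].

Lemma block_exists (G0 : sgraph T) : cng G0 -> exists B, is_block e B /\ sub_le G0 B.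
Proof.
move=> HG0.
pose P := fun B : ({set T} * {set {set T}})%type => cng B && sub_le G0 B.
have PG0 : P G0 by rewrite /P HG0 /sub_le !subxx.
case: (arg_maxnP (fun B : ({set T} * {set {set T}})%type => #|B.1| + #|B.2|) PG0)
  => B /andP[PB sGB] Hmax.
exists B; split => //; split => // B' HB' /andP[s1 s2].
have PB' : P B'.
  move: sGB => /andP[t1 t2]; rewrite /P /cng HB' /sub_le.
  by rewrite (subset_trans t1 s1) (subset_trans t2 s2).
have := Hmax _ PB'.
have l1 := subset_leq_card s1; have l2 := subset_leq_card s2.
move=> Hw.
have e1 : B.1 == B'.1 by rewrite eqEcard s1 /=; move: Hw l1 l2; rewrite /= ; lia.
have e2 : B.2 == B'.2 by rewrite eqEcard s2 /=; move: Hw l1 l2; rewrite /= ; lia.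
by case: B B' {HB' PB' sGB Hmax PB s1 s2 l1 l2 Hw} e1 e2 => [? ?] [? ?] /= /eqP-> /eqP->.
Qed.

Lemma add_vertex (G : sgraph T) b q1 q2 :
  is_subgraph e G -> complete G -> b \notin G.1 -> q1 \in G.1 -> q2 \in G.1 ->
  q1 != q2 -> e b q1 -> e b q2 ->
  cng (b |: G.1, G.2 :|: [set [set b; q1]; [set b; q2]]).
Proof.
move=> /andP[sE sV] Hc bG h1 h2 q12 eb1 eb2.
set G' := (b |: G.1, G.2 :|: [set [set b; q1]; [set b; q2]]).
have key : forall S q, S \subset G'.1 -> q \in S -> (q == q1) || (q == q2) ->
   {in S &, forall a c, conn S G'.2 a c}.
  move=> S q sS qS qq; apply: (hub_conn qS) => a aS.
  have qG : q \in G.1 by case/orP: qq => /eqP->.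
  have qb : q != b by apply: contraNneq bG => <-.
  case: (eqVneq a q) => [->|aq]; first exact: connect0.
  have := subsetP sS _ aS; rewrite /= in_setU1 => /orP[/eqP ab|aG].
    rewrite ab conn_sym; apply: conn_edge; [by rewrite -ab | done | by rewrite eq_sym | ].
    rewrite /G' /= inE; apply/orP; right; rewrite !inE.
    by case/orP: qq => /eqP->; rewrite eqxx ?orbT.
  apply: conn_edge => //; first by rewrite eq_sym.
  rewrite /G' /= inE; apply/orP; left.
  by have := forallP Hc q; rewrite qG /= => /forallP /(_ a); rewrite aG eq_sym aq.
have sub2 : G'.2 \subset EH e.
  apply/subsetP => f; rewrite /= in_setU in_set2 => /orP[/(subsetP sE)//|/orP[]/eqP->];
  by rewrite EH_edge.
apply/and3P; split.
- apply/andP; split => //; apply/forallP => f; apply/implyP.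
  rewrite /= !inE => /orP[fG|/orP[]/eqP->].
  + have := forallP sV f; rewrite fG /= => sf.
    exact: subset_trans sf (subsetUr _ _).
  + by apply/subsetP => y; rewrite !inE => /orP[]/eqP->; rewrite ?eqxx ?h1 ?orbT.
  + by apply/subsetP => y; rewrite !inE => /orP[]/eqP->; rewrite ?eqxx ?h2 ?orbT.
- have q1G' : q1 \in G'.1 by rewrite /= in_setU1 h1 orbT.
  by apply/eqP; apply: (ncomp_eq1 q1G'); apply: (key _ q1) => //; rewrite eqxx.
- have Hcg : gconnected G'.
    have q1G' : q1 \in G'.1 by rewrite /= in_setU1 h1 orbT.
    by apply/eqP; apply: (ncomp_eq1 q1G'); apply: (key _ q1) => //; rewrite eqxx.
  apply: nocut_of => // w wG.
  case: (eqVneq w q1) => [wq|wq].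
    have H2 : q2 \in G'.1 :\ w by rewrite !inE wq eq_sym q12 /= h2 orbT.
    by apply: (key _ q2 (subsetDl _ _) H2); rewrite eqxx orbT.
  have H1 : q1 \in G'.1 :\ w by rewrite !inE eq_sym wq /= h1 orbT.
  by apply: (key _ q1 (subsetDl _ _) H1); rewrite eqxx.
Qed.


Lemma sorted_conn (R : rel T) S' F' s : sorted R s -> all (mem S') s ->
  {in S' &, subrel R (crel S' F')} -> {in s &, forall a b, conn S' F' a b}.
Proof.
case: s => [|h t] //= Hp Hall Hsub.
have Hp' : path (crel S' F') h t := sub_in_path Hsub Hall Hp.
have Hc := path_connect Hp'.
move=> a b Ha Hb; apply: (conn_trans (b:=h)); last exact: Hc.
by rewrite conn_sym; exact: Hc.
Qed.

Lemma path_in S F x p : path (crel S F) x p -> all (mem S) p.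
Proof.
elim: p x => [|y p IH] x //= /andP[/and3P[_ yS _] Hp].
by rewrite yS (IH y).
Qed.

Lemma cycle_contra (B : sgraph T) u x w p :
  is_block e B -> B.1 = [set x; u] -> e u x -> e u w -> x != w ->
  path (crel ([set: T] :\ u) (EH e)) x p -> uniq (x :: p) -> last x p = w -> False.
Proof.
move=> [/and3P[HBs _ _] Bmax] B1 eux euw xw Hp Hu Hw.
set R := crel ([set: T] :\ u) (EH e).
set s := x :: p.
have xu : x != u by apply: contraTneq eux => ->; rewrite e_irr.
have wu : w != u by apply: contraTneq euw => ->; rewrite e_irr.
have sU : forall a, a \in s -> a != u.
  move=> a; rewrite inE => /orP[/eqP->//|ap].
  by have := allP (path_in Hp) a ap; rewrite !inE => /andP[].
set D := u |: [set a in s].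
set C := (D, [set f in EH e | f \subset D]).
have uD : u \in D by rewrite /D in_setU1 eqxx.
have sD : forall a, a \in s -> a \in D by move=> a ains; rewrite /D in_setU1 inE ains orbT.
have xs : x \in s by rewrite /s mem_head.
have ws : w \in s by rewrite -Hw /s mem_last.
have edgeC : forall a c, a \in D -> c \in D -> e a c -> [set a; c] \in C.2.
  move=> a c aD cD ac; rewrite /C /= in_set EH_edge ac /=.
  by apply/subsetP => y /set2P[]->.
have subR : forall S', S' \subset D -> {in S' &, subrel R (crel S' C.2)}.
  move=> S' sS a c Ha Hc /and3P[_ _ /andP[ac H]].
  rewrite /= Ha Hc /adjF /= ac /=; apply: edgeC; try exact: (subsetP sS).
  by rewrite -EH_edge.
have Hsorted : sorted R s by [].
have HC : cng C.
  have Hcon : gconnected C.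
    apply/eqP; apply: (ncomp_eq1 (sD _ xs)); apply: hub_conn (sD _ xs) _ => a.
    rewrite /D in_setU1 => /orP[/eqP->|].
      by apply: conn_edge; [exact: sD | exact: uD | exact: xu | apply: edgeC; [exact: sD | exact: uD | rewrite e_sym]].
    rewrite inE => ains; apply: (sorted_conn Hsorted) => //.
      by apply/allP => y ys; apply: sD.
    exact: subR.
  apply/and3P; split => //.
  - apply/andP; split.
      by apply/subsetP => f; rewrite /C /= in_set => /andP[].
    by apply/forallP => f; apply/implyP; rewrite /C /= in_set => /andP[].
  apply: nocut_of => // v vD.
  case: (eqVneq v u) => [->|vu].
    move=> a b; rewrite /C /= !in_setD1 => /andP[au aD] /andP[bu bD].
    have ains : a \in s by move: aD; rewrite /D in_setU1 (negbTE au) in_set.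
    have bs : b \in s by move: bD; rewrite /D in_setU1 (negbTE bu) in_set.
    apply: (sorted_conn Hsorted) => //.
      apply/allP => y ys; suff H : y \in D :\ u by exact: H.
      by rewrite in_setD1 sU // sD.
    by apply: subR; exact: subsetDl.
  have vs : v \in s by move: vD; rewrite /D in_setU1 (negbTE vu) inE.
  have [s1 [s2 Es]] : exists s1 s2, s = s1 ++ v :: s2.
    by move: vs; rewrite /s; case/splitPr => s1 s2; exists s1, s2.
  have Huq : uniq (s1 ++ v :: s2) by rewrite -Es.
  have vs1 : v \notin s1.
    by move: Huq; rewrite cat_uniq => /and3P[_ /hasPn /(_ v (mem_head _ _))].
  have vs2 : v \notin s2 by move: Huq; rewrite cat_uniq => /and3P[_ _ /andP[]].
  have sor : sorted R s1 * sorted R (v :: s2) by apply: cat_sorted2; rewrite -Es.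
  have uDv : u \in C.1 :\ v by rewrite /C /= in_setD1 eq_sym vu uD.
  apply: (hub_conn uDv) => a; rewrite /C /= in_setD1 => /andP[av aD].
  move: aD; rewrite /D in_setU1 => /orP[/eqP->|]; first exact: connect0.
  rewrite in_set => ains; have : a \in s1 ++ v :: s2 by rewrite -Es.
  rewrite mem_cat inE (negbTE av) /= => /orP[ains1|ains2].
  - case: s1 Es sor vs1 ains1 Huq => [|h t] // Es [sor1 _] vs1 ains1 _.
    have hx : h = x by case: Es.
    have all1 : all (mem (D :\ v)) (h :: t).
      apply/allP => y ys; suff H : y \in D :\ v by exact: H.
      rewrite in_setD1 sD; last by rewrite Es mem_cat ys.
      by rewrite andbT; apply: contraNneq vs1 => <-.
    have xDv : x \in D :\ v by rewrite -hx; apply: (allP all1); rewrite mem_head.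
    apply: (conn_trans (b:=x)).
      apply: conn_edge; [exact: uDv | exact: xDv | by rewrite eq_sym xu |].
      by apply: edgeC; [exact: uD | exact: sD | exact: eux].
    apply: (sorted_conn sor1 all1 (subR _ (subsetDl _ _))); last by [].
    by rewrite -hx mem_head.
  - case: s2 Es sor vs2 ains2 Huq => [|h t] // Es [_ sor2] vs2 ains2 _.
    have sor2' : sorted R (h :: t) by move: sor2 => /= /andP[].
    have all2 : all (mem (D :\ v)) (h :: t).
      apply/allP => y ys; suff H : y \in D :\ v by exact: H.
      rewrite in_setD1 sD; last by rewrite Es mem_cat inE ys !orbT.
      by rewrite andbT; apply: contraNneq vs2 => <-.
    have wt : w \in h :: t.
      by rewrite -Hw (_ : last x p = last x s) // Es last_cat /= mem_last.
    have wDv : w \in D :\ v by apply: (allP all2).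
    apply: (conn_trans (b:=w)).
      apply: conn_edge; [exact: uDv | exact: wDv | by rewrite eq_sym wu |].
      by apply: edgeC; [exact: uD | exact: sD | exact: euw].
    rewrite conn_sym.
    exact: (sorted_conn sor2' all2 (subR _ (subsetDl _ _))).
have sBC : sub_le B C.
  apply/andP; split.
    rewrite B1; apply/subsetP => y /set2P[]->; [exact: sD | exact: uD].
  apply/subsetP => f fB; rewrite /C /= in_set.
  have /andP[sE sV] := HBs; rewrite (subsetP sE _ fB) /=.
  apply: subset_trans (implyP (forallP sV f) fB) _.
  rewrite B1; apply/subsetP => y /set2P[]->; [exact: sD | exact: uD].
have EC := Bmax C HC sBC.
have : w \in C.1 by exact: sD.
rewrite EC B1 => /set2P[] wE.
  by move: xw; rewrite wE eqxx.
by move: wu; rewrite wE eqxx.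
Qed.

End Aux.

Delimit Scope R_scope with Re.

Section Main.
Variables (T : finType) (e : rel T).
Hypotheses (e_sym : symmetric e) (e_irr : irreflexive e)
  (H_conn : gconnected (Hgraph e))
  (H_block : block_graph e) (H_pointed : pointed e).
Variables (Q : sgraph T).
Hypothesis (HQ : near_leaf e Q).
Variable (v : T).
Hypothesis (Hv : is_anchor e Q v \/
        ((~ exists a, is_anchor e Q a) /\ v \in Q.1 /\ cutH e v)).
Variable (x : T).
Hypotheses (Hxv : x != v) (HxQ : x \in Q.1) (Hxcut : cutH e x).

Let QB : is_block e Q := HQ.1.1.
Let Qc : complete Q := H_block QB.
Let Qs : is_subgraph e Q. Proof. by case/and3P: QB.1. Qed.

Lemma Qedge a b : a \in Q.1 -> b \in Q.1 -> a != b -> [set a; b] \in Q.2.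
Proof.
move=> Ha Hb ab; have := forallP Qc a; rewrite Ha /= => /forallP /(_ b).
by rewrite Hb ab.
Qed.

Lemma Qadj a b : a \in Q.1 -> b \in Q.1 -> a != b -> e a b.
Proof.
move=> Ha Hb ab; rewrite -(EH_edge e_sym e_irr).
by apply: (subsetP (andP Qs).1); apply: Qedge.
Qed.

Lemma inQ2 f : f \in EH e -> f \subset Q.1 -> f \in Q.2.
Proof.
case/(EHP e) => a [b [eab ->]] sf.
apply: Qedge; try by apply: (subsetP sf); rewrite !inE eqxx ?orbT.
by apply: contraTneq eab => ->; rewrite e_irr.
Qed.

Lemma Q2sub a b : [set a; b] \in Q.2 -> (a \in Q.1) && (b \in Q.1).
Proof.
move=> H; have := implyP (forallP (andP Qs).2 _) H => /subsetP S.
by rewrite !S // !inE eqxx ?orbT.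
Qed.

Lemma two_nbrs b q1 q2 : b \notin Q.1 -> q1 \in Q.1 -> q2 \in Q.1 ->
  e b q1 -> e b q2 -> q1 = q2.
Proof.
move=> bQ h1 h2 e1 e2; apply/eqP; apply: contraT => q12.
have HC := add_vertex e_sym e_irr Qs Qc bQ h1 h2 q12 e1 e2.
have sQ : sub_le Q (b |: Q.1, Q.2 :|: [set [set b; q1]; [set b; q2]]).
  by rewrite /sub_le /= subsetUl subsetU1.
have EQ := QB.2 _ HC sQ.
have : b \in (b |: Q.1, Q.2 :|: [set [set b; q1]; [set b; q2]]).1 by rewrite /= setU11.
by rewrite EQ (negbTE bQ).
Qed.

Lemma edge_cng a b : e a b -> cng e ([set a; b], [set [set a; b]]).
Proof.
move=> eab.
have ab : a != b by apply: contraTneq eab => ->; rewrite e_irr.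
have Hc : gconnected ([set a; b], [set [set a; b]]).
  apply/eqP; apply: (ncomp_eq1 (a := a)); first by rewrite !inE eqxx.
  move=> c d /set2P[]-> /set2P[]->; try exact: connect0.
    by apply: conn_edge; rewrite ?inE ?eqxx ?orbT.
  by rewrite conn_sym; apply: conn_edge; rewrite ?inE ?eqxx ?orbT.
apply/and3P; split => //.
  apply/andP; split.
    by apply/subsetP => f; rewrite inE => /eqP->; rewrite EH_edge.
  by apply/forallP => f; apply/implyP; rewrite inE => /eqP->.
apply: nocut_of => // w wG c d.
case/set2P: wG => ->; rewrite !in_setD1 => /andP[cw Hc'] /andP[dw Hd'];
  case/set2P: Hc' cw => -> cw; case/set2P: Hd' dw => -> dw;
  first [exact: connect0 | by rewrite eqxx in cw | by rewrite eqxx in dw].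
Qed.


Lemma not_internal_nb B : neighbours e Q B -> x \in B.1 -> ~ internal_block e B.
Proof.
move=> Hnb xB Hint.
case: Hv => [[_ [_ _ Hsc]] | [Hno _]].
  have := Hsc B Hint Hnb; move/setP/(_ x); rewrite in_setI xB HxQ in_set1 /= => Exv.
  by move: Hxv; rewrite -Exv.
case: HQ => _ [Hall | [a Ha]].
  have [_ H1] := Hall B Hnb; have [_ H2] := Hint.
  by rewrite H1 in H2.
by apply: Hno; exists a; split => //; exists B; split.
Qed.

Lemma pend u w : u \notin Q.1 -> e x u -> e u w -> w = x.
Proof.
move=> uQ exu euw.
have xu : x != u by apply: contraTneq exu => ->; rewrite e_irr.
have wu : w != u by apply: contraTneq euw => ->; rewrite e_irr.
case: (block_exists (edge_cng exu)) => B [HB /andP[s1 s2]].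
have xB : x \in B.1 by apply: (subsetP s1); rewrite !inE eqxx.
have uB : u \in B.1 by apply: (subsetP s1); rewrite !inE eqxx orbT.
have Hnb : neighbours e Q B.
  split => //.
    by move=> EQ; move: uQ; rewrite EQ uB.
  by apply/negP => dis; have := disjointFr dis HxQ; rewrite xB.
have Hni := not_internal_nb Hnb xB.
have c1 : 0 < ncutin e B.
  by rewrite /ncutin card_gt0; apply/set0Pn; exists x; rewrite inE xB Hxcut.
have c2 : ncutin e B = 1.
  have : ~~ (2 <= ncutin e B) by apply/negP => H; apply: Hni; split.
  by move: c1; case: (ncutin e B) => [|[|n]].
have [_ B2] := H_pointed (conj HB c2).
have B1 : B.1 = [set x; u].
  apply/eqP; rewrite eq_sym eqEcard B2 cards2 xu andbT.
  by apply/subsetP => y /set2P[]->.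
have ucut : ~~ cutH e u.
  apply/negP => cu.
  have : 2 <= ncutin e B.
    rewrite /ncutin (_ : 2 = #|[set x; u]|); last by rewrite cards2 xu.
    by apply: subset_leq_card; apply/subsetP => y /set2P[]->; rewrite inE ?xB ?uB ?Hxcut ?cu.
  by rewrite c2.
apply/eqP; apply: contraT => wx.
have : ncomp ([set: T] :\ u) (EH e) <= 1.
  by move: ucut; rewrite /cutH /is_cut /= in_setT /= -leqNgt (eqP H_conn).
move/ncomp_conn => Hcn.
have xS : x \in [set: T] :\ u by rewrite in_setD1 in_setT andbT.
have wS : w \in [set: T] :\ u by rewrite in_setD1 in_setT andbT.
have := Hcn x w xS wS.
case/connectP => p Hp Hlast.
move: Hlast; case: (shortenP Hp) => p' Hp' Hu _ Hlast.
have eux : e u x by rewrite e_sym.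
have xw : x != w by rewrite eq_sym.

by case: (cycle_contra e_sym e_irr HB B1 eux euw xw Hp' Hu (esym Hlast)).
Qed.


Lemma ant_mem y a b : a != b -> ([set a; b] \in big_ant_edges e Q x y) =
  ((a \in Q.1) && (b \in Q.1)) || (e a b && [|| a == x, b == x, a == y | b == y]).
Proof.
move=> ab.
have hQ2 : ([set a; b] \in Q.2) = (a \in Q.1) && (b \in Q.1).
  apply/idP/idP; first exact: Q2sub.
  by case/andP => ha hb; apply: Qedge.
have hd : forall z, ([set a; b] \in [set f in EH e | z \in f]) = e a b && ((a == z) || (b == z)).
  by move=> z; rewrite in_set EH_edge // in_set2 ![z == _]eq_sym.
rewrite /big_ant_edges /delta !in_setU hQ2 !hd.
by case: (_ && _); case: (e a b); case: (a == x); case: (b == x); case: (a == y); case: (b == y).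
Qed.

Definition NN := INR #|T|.
Definition idx (a : T) := (INR (enum_rank a) + 2)%Re.
Definition lI y a := if a == x then 0%Re else if a == y then (NN + 3)%Re
  else if a \in Q.1 then idx a else if e x a then 1%Re else 0%Re.
Definition rI y a := if a == x then 0%Re else if a == y then (NN + 3)%Re
  else if a \in Q.1 then idx a else if e x a then (NN + 3)%Re else (NN + 2)%Re.
Definition Vant y := [set a | [|| a \in Q.1, e x a | e y a]].

Lemma NN_ge0 : (0 <= NN)%Re.
Proof. exact: pos_INR. Qed.

Lemma idx_bnd a : (2 <= idx a <= NN + 1)%Re.
Proof.
have h := ltn_ord (enum_rank a).
have h1 : (INR (enum_rank a).+1 <= NN)%Re by apply: le_INR; apply/leP.
rewrite S_INR in h1; have := pos_INR (enum_rank a); rewrite /idx; lra.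
Qed.

Lemma idx_inj a b : idx a = idx b -> a = b.
Proof.
rewrite /idx => H; apply: enum_rank_inj; apply: ord_inj; apply: INR_eq; exact: (Rplus_eq_reg_r _ _ _ H).
Qed.


Lemma cat y a : y \in Q.1 -> a \in Vant y ->
  (a = x /\ lI y a = 0%Re /\ rI y a = 0%Re) \/
  (a = y /\ (y == x) = false /\ lI y a = (NN + 3)%Re /\ rI y a = (NN + 3)%Re) \/
  ((a \in Q.1) = true /\ (a == x) = false /\ (a == y) = false /\
     lI y a = idx a /\ rI y a = idx a) \/
  ((a \in Q.1) = false /\ (a == x) = false /\ (a == y) = false /\
     e x a = true /\ e a x = true /\ e y a = (y == x) /\ e a y = (y == x) /\
     lI y a = 1%Re /\ rI y a = (NN + 3)%Re) \/
  ((a \in Q.1) = false /\ (a == x) = false /\ (a == y) = false /\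
     e x a = false /\ e a x = false /\ e y a = true /\ e a y = true /\ (y == x) = false /\
     lI y a = 0%Re /\ rI y a = (NN + 2)%Re).
Proof.
move=> yQ; rewrite in_set => Ha; rewrite /lI /rI.
case: (eqVneq a x) => [->|ax]; first by left.
case: (eqVneq a y) => [ay|ay].
  by right; left; rewrite -ay (negbTE ax).
case: (boolP (a \in Q.1)) => aQ.
  by right; right; left.
case: (boolP (e x a)) => exa.
  right; right; right; left.
  have eya : e y a = (y == x).
    case: (eqVneq y x) => [->|yx]; first by [].
    apply/negbTE; apply/negP => eya.
    have := two_nbrs aQ yQ HxQ; rewrite e_sym eya e_sym exa => /(_ isT isT) Eyx.
    by rewrite Eyx eqxx in yx.
  by rewrite (e_sym a x) (e_sym a y) exa eya.
right; right; right; right.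
move: Ha; rewrite (negbTE aQ) (negbTE exa) /= => eya.
have yx : (y == x) = false.
  by apply/negbTE; apply: contraTneq eya => ->; rewrite (negbTE exa).
by rewrite (e_sym a x) (e_sym a y) (negbTE exa) eya yx.
Qed.

Ltac simp := repeat match goal with H : ?L = ?R |- context[?L] => rewrite H end.

Lemma ant_ok y : y \in Q.1 -> co_interval_subgraph e (Vant y, big_ant_edges e Q x y).
Proof.
move=> yQ; split.
  apply/andP; split.
    apply/subsetP => f; rewrite /big_ant_edges !in_setU => /orP[/orP[]|].
    - exact: (subsetP (andP Qs).1).
    - by rewrite /delta in_set => /andP[].
    - by rewrite /delta in_set => /andP[].
  apply/forallP => f; apply/implyP; rewrite /big_ant_edges !in_setU => /orP[/orP[]|].
  - move=> fQ; have := implyP (forallP (andP Qs).2 f) fQ => /subsetP sf.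
    by apply/subsetP => a /sf aQ; rewrite in_set aQ.
  - rewrite /delta in_set => /andP[/(EHP e)[a [b [eab ->]]] /set2P[] Ey]; rewrite -Ey in eab *;
    apply/subsetP => c /set2P[]->; rewrite in_set;
    first [by rewrite HxQ | by rewrite eab !orbT | by rewrite e_sym eab !orbT].
  - rewrite /delta in_set => /andP[/(EHP e)[a [b [eab ->]]] /set2P[] Ey]; rewrite -Ey in eab *;
    apply/subsetP => c /set2P[]->; rewrite in_set;
    first [by rewrite yQ | by rewrite eab !orbT | by rewrite (e_sym y) eab !orbT].
exists (lI y), (rI y); split.
  move=> a _; have := NN_ge0; have := idx_bnd a; rewrite /lI /rI.
  by case: ifP => _; [lra|case: ifP => _; [lra|case: ifP => _; [lra|case: ifP => _; lra]]].
move=> a b Ha Hb ab /=.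
have N0 := NN_ge0.
rewrite ant_mem //.
have ia := idx_bnd a; have ib := idx_bnd b.
case: (cat yQ Ha) => [[? Fa]|[[? Fa]|[Fa|[Fa|Fa]]]];
case: (cat yQ Hb) => [[? Fb]|[[? Fb]|[Fb|[Fb|Fb]]]]; subst;
  rewrite ?eqxx in ab; try done;
  repeat match goal with H : _ /\ _ |- _ => destruct H end;
  simp; rewrite ?eqxx ?HxQ ?yQ /= ?andbF ?andbT ?orbF ?orbT; idtac.
all: first [ split; [move=> _; first [left; lra | right; lra] | by []]
           | split; [by [] | case => ?; exfalso; lra]
           | split; [move=> _ | by []];
             case: (Rtotal_order (idx a) (idx b)) => [h|[h|h]];
             [left; lra | by move: ab; rewrite (idx_inj h) eqxx | right; lra] ].
Qed.


Lemma main_thm (L : sgraph T) (HL : leaf_block e L) (HLQ : neighbours e Q L)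
  (HxL : x \in L.1) (K : sgraph T) (HK : maximal_co_interval e K)
  (HLK : L.2 \subset K.2) : exists2 y, y \in Q.1 & K.2 = big_ant_edges e Q x y.
Proof.
have [LB _] := HL.
have [_ L2] := H_pointed HL.
have /cards1P[z Ez] : #|L.1 :\ x| == 1.
  by move: L2; rewrite (cardsD1 x) HxL add1n => -[->].
have : z \in L.1 :\ x by rewrite Ez set11.
rewrite in_setD1 => /andP[zx zL].
have L1 : L.1 = [set x; z].
  apply/eqP; rewrite eq_sym eqEcard L2 cards2 eq_sym zx andbT.
  by apply/subsetP => c /set2P[]->.
have Ls : is_subgraph e L by case/and3P: LB.1.
have xzL : [set x; z] \in L.2.
  have := forallP (H_block LB) x; rewrite HxL /= => /forallP /(_ z).
  by rewrite zL eq_sym zx.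
have exz : e x z by rewrite -(EH_edge e_sym e_irr); exact: (subsetP (andP Ls).1).
have zQ : z \notin Q.1.
  apply/negP => zQ.
  have sLQ : sub_le L Q.
    apply/andP; split.
      by rewrite L1; apply/subsetP => c /set2P[]->.
    apply/subsetP => f fL; apply: inQ2; first exact: (subsetP (andP Ls).1).
    have := implyP (forallP (andP Ls).2 f) fL; rewrite L1 => sf.
    by apply: subset_trans sf _; apply/subsetP => c /set2P[]->.
  have EQ := LB.2 _ QB.1 sLQ.
  by case: HLQ => _ _ /(_ EQ).
have zn : forall w, e z w -> w = x by move=> w; apply: pend zQ exz.
case: HK => [[Ks [l [r [lr Hiv]]]] Kmax].
pose DJ := fun a b => Dj (l a, r a) (l b, r b).
have xzK : [set x; z] \in K.2 := subsetP HLK _ xzL.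
have KE : forall a b, [set a; b] \in K.2 -> e a b.
  by move=> a b H; rewrite -(EH_edge e_sym e_irr); exact: (subsetP (andP Ks).1).
have KV : forall a b, [set a; b] \in K.2 -> (a \in K.1) && (b \in K.1).
  move=> a b H; have := implyP (forallP (andP Ks).2 _) H => /subsetP S.
  by rewrite !S // !inE eqxx ?orbT.
have KD : forall a b, [set a; b] \in K.2 -> DJ a b.
  move=> a b H; have /andP[Ha Hb] := KV _ _ H.
  have ab : a != b by apply: contraTneq (KE _ _ H) => ->; rewrite e_irr.
  exact: (proj1 (Hiv a b Ha Hb ab) H).
have KN' : forall a b, a \in K.1 -> b \in K.1 -> [set a; b] \notin K.2 -> ~ DJ a b.
  move=> a b Ha Hb nab.
  case: (eqVneq a b) => [<-|ab].
    by rewrite /DJ /Dj /=; have := lr a Ha; lra.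
  by move/(proj2 (Hiv a b Ha Hb ab)); apply/negP.
have KN : forall a b, a \in K.1 -> b \in K.1 -> ~~ e a b -> ~ DJ a b.
  move=> a b Ha Hb nab; apply: KN' => //; apply: contra nab; exact: KE.
have /andP[xK zK] := KV _ _ xzK.
have nzw : forall w, w != x -> ~~ e z w.
  by move=> w wx; apply/negP => /zn wE; rewrite wE eqxx in wx.
have nxc : forall c q, c \notin Q.1 -> q != x -> e c q -> ~~ e x c.
  move=> c q cQ qx ecq; apply/negP => exc.
  by have := pend cQ exc ecq => qE; rewrite qE eqxx in qx.
have neqQ : forall a b, a \in Q.1 -> b \notin Q.1 -> a != b.
  by move=> a b aQ; apply: contraNneq => <-.
have cls : forall a b, [set a; b] \in K.2 -> a != x -> b != x ->
    (a \in Q.1) || (b \in Q.1).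
  move=> a b H ax bx; have eab := KE _ _ H.
  have /andP[aK bK] := KV _ _ H.
  case: (boolP ([set x; a] \in K.2)) => xa.
    case: (boolP (a \in Q.1)) => // aQ.
    by have := pend aQ (KE _ _ xa) eab => bE; rewrite bE eqxx in bx.
  case: (boolP ([set x; b] \in K.2)) => xb.
    case: (boolP (b \in Q.1)) => bQ; first by rewrite orbT.
    have eba : e b a by rewrite e_sym.
    by have := pend bQ (KE _ _ xb) eba => aE; rewrite aE eqxx in ax.
  exfalso; apply: (iv_2K2 _ _ _ _ (KD _ _ xzK) (KD _ _ H)).
  - exact: KN'.
  - exact: KN'.
  - by apply: KN => //; apply: nzw.
  - by apply: KN => //; apply: nzw.
have uniq_ext : forall q1 c1 q2 c2, [set q1; c1] \in K.2 -> [set q2; c2] \in K.2 ->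
    q1 \in Q.1 -> q2 \in Q.1 -> c1 \notin Q.1 -> c2 \notin Q.1 -> q1 != x -> q2 != x ->
    q1 = q2.
  move=> q1 c1 q2 c2 K1 K2 q1Q q2Q c1Q c2Q q1x q2x.
  apply/eqP; apply: contraT => q12; exfalso.
  have /andP[q1K c1K] := KV _ _ K1; have /andP[q2K c2K] := KV _ _ K2.
  have e1 : e c1 q1 by rewrite e_sym; exact: KE.
  have e2 : e c2 q2 by rewrite e_sym; exact: KE.
  have c1x : c1 != x by rewrite eq_sym; apply: neqQ.
  have c2x : c2 != x by rewrite eq_sym; apply: neqQ.
  apply: (iv_6 _ _ _ _ _ _ (KD _ _ xzK) (KD _ _ K1) (KD _ _ K2)).
  - by apply: KN => //; apply: nxc e1.
  - by apply: KN => //; apply: nzw.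
  - by apply: KN => //; apply: nxc e2.
  - by apply: KN => //; apply: nzw.
  - by apply: KN => //; apply: nzw.
  - by apply: KN => //; apply: nzw.
  - apply: KN => //; apply/negP => e12; rewrite e_sym in e12.
    by have := two_nbrs c2Q q1Q q2Q e12 e2 => E; rewrite E eqxx in q12.
  - apply: KN => //; apply/negP => e21; rewrite e_sym in e21.
    by have := two_nbrs c1Q q1Q q2Q e1 e21 => E; rewrite E eqxx in q12.
have [y yQ Hy] : exists2 y, y \in Q.1 & forall q c, [set q; c] \in K.2 ->
    q \in Q.1 -> c \notin Q.1 -> q != x -> q = y.
  case: (boolP [exists q, exists c, [&& q \in Q.1, q != x, c \notin Q.1 & [set q; c] \in K.2]]).
    case/existsP => y /existsP[c /and4P[yQ yx cQ yc]].
    exists y => // q c' H qQ c'Q qx; exact: (uniq_ext _ _ _ _ H yc).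
  move=> Hn; exists x => // q c H qQ cQ qx; exfalso; apply: (negP Hn).
  by apply/existsP; exists q; apply/existsP; exists c; rewrite qQ qx cQ H.
have sub : K.2 \subset big_ant_edges e Q x y.
  apply/subsetP => f fK.
  have := subsetP (andP Ks).1 _ fK; case/(EHP e) => a [b [eab fE]].
  rewrite fE in fK *.
  have ab : a != b by apply: contraTneq eab => ->; rewrite e_irr.
  rewrite ant_mem // eab /=.
  case: (eqVneq a x) => [_|ax]; first by rewrite orbT.
  case: (eqVneq b x) => [_|bx]; first by rewrite orbT.
  case: (boolP (a \in Q.1)) => aQ; case: (boolP (b \in Q.1)) => bQ //=.
  - by rewrite (Hy _ _ fK aQ bQ ax) eqxx ?orbT.
  - have fK' : [set b; a] \in K.2 by rewrite setUC.
    by rewrite (Hy _ _ fK' bQ aQ bx) eqxx ?orbT.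
  - by move: (cls _ _ fK ax bx); rewrite (negbTE aQ) (negbTE bQ).
exists y => //.
apply/eqP; apply: contraT => neq; exfalso; apply: Kmax.
exists (Vant y, big_ant_edges e Q x y); split; first exact: ant_ok.
by rewrite properEneq neq sub.
Qed.

End Main.

Unset Implicit Arguments.

Theorem mainTheorem9 (T : finType) (e : rel T)
  (e_sym : symmetric e) (e_irr : irreflexive e)
  (H_conn : gconnected (Hgraph e))
  (H_block : block_graph e) (H_pointed : pointed e)
  (Q : sgraph T) (HQ : near_leaf e Q)
  (v : T)
  (Hv : is_anchor e Q v \/
        ((~ exists a, is_anchor e Q a) /\ v \in Q.1 /\ cutH e v))
  (x : T) (Hxv : x != v) (HxQ : x \in Q.1) (Hxcut : cutH e x)
  (L : sgraph T) (HL : leaf_block e L) (HLQ : neighbours e Q L) (HxL : x \in L.1) :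
  forall K : sgraph T, maximal_co_interval e K -> L.2 \subset K.2 ->
    exists2 y, y \in Q.1 & K.2 = big_ant_edges e Q x y.
Proof.
move=> K HK HLK.
exact: (main_thm e_sym e_irr H_conn H_block H_pointed HQ Hv Hxv HxQ Hxcut HL HLQ HxL HK HLK).
Qed.
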